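(* For every $n\ge1$, $\eta_{0,1,1}(N_{n,n})=1$. For $n\ge2$, \[ \eta_{0,1,1}(N_{n,k})=\begin{cases}\zeta(n)-\eta_{0,1,1}(N_{n-1,1}), & k=1,\\ \zeta(n)+\eta_{0,1,1}(N_{n-1,k-1})-\eta_{0,1,1}(N_{n-1,k}), & 1<k<n.\end{cases} \]
   Context: For a composition $I=(i_1,\dots,i_j)$ and $n\ge1$, $M_I(n)=\sum_{1\le n_1<\cdots<n_j\le n}n_1^{-i_1}\cdots n_j^{-i_j}$. Define $\eta_{0,1,1}(M_I)=\sum_{n=1}^\infty\frac{M_I(n)}{(n+1)(n+2)}$, extended linearly. For $n\ge m\ge1$, $N_{n,m}=\sum_I M_I$, the sum over all compositions $I$ of $n$ with exactly $m$ parts (the sum of monomial symmetric functions over partitions of $n$ with $m$ parts). $\zeta$ is the Riemann zeta function. *)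

(* Defs.v *)
From Stdlib Require Import Reals List.
Import ListNotations.
Open Scope R_scope.

Definition lsum (f : nat -> R) (l : list nat) : R :=
  fold_right (fun m acc => f m + acc) 0 l.

(* Mfrom I a n = sum over a < n_1 < ... < n_j <= n of n_1^{-i_1} ... n_j^{-i_j}. *)
Fixpoint Mfrom (I : list nat) (a n : nat) : R :=
  match I with
  | [] => 1
  | i :: I' =>
      lsum (fun m => / (INR m ^ i) * Mfrom I' m n) (List.seq (S a) (n - a))
  end.

Definition M (I : list nat) (n : nat) : R := Mfrom I 0 n.

Fixpoint comps (n m : nat) : list (list nat) :=
  match m with
  | O => match n with O => [[]] | _ => [] end
  | S m' => flat_map (fun p => map (cons p) (comps (n - p) m'))
                     (List.seq 1 n)
  end.

(* N_{n,m}(j) = sum over compositions I of n with m parts of M_I(j). *)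
Definition Nsum (n m : nat) (j : nat) : R :=
  fold_right (fun I acc => M I j + acc) 0 (comps n m).

Definition eta011_is (f : nat -> R) (l : R) : Prop :=
  infinite_sum (fun j => f (S j) / (INR (S j + 1) * INR (S j + 2))) l.

Definition zeta_is (s : nat) (l : R) : Prop :=
  infinite_sum (fun k => / (INR (S k) ^ s)) l.

(* Main.v *)
Require Import Defs.
From Stdlib Require Import Reals Lra Lia List.
Import ListNotations.
Open Scope R_scope.


Lemma lsum_app f l1 l2 : lsum f (l1++l2) = lsum f l1 + lsum f l2.
Proof. induction l1; simpl; [ring| rewrite IHl1; ring]. Qed.

Lemma lsum_ext f h l : (forall m, In m l -> f m = h m) -> lsum f l = lsum h l.
Proof. induction l; simpl; intros H; [reflexivity|]. rewrite H by auto. rewrite IHl by auto. reflexivity. Qed.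

Lemma lsum_plus f h l : lsum (fun m => f m + h m) l = lsum f l + lsum h l.
Proof. induction l; simpl; [ring| rewrite IHl; ring]. Qed.

Lemma lsum_scal c f l : lsum (fun m => c * f m) l = c * lsum f l.
Proof. induction l; simpl; [ring| rewrite IHl; ring]. Qed.

Lemma lsum_zero l : lsum (fun _ => 0) l = 0.
Proof. induction l; simpl; [ring| rewrite IHl; ring]. Qed.

Lemma lsum_map f h l : lsum f (map h l) = lsum (fun m => f (h m)) l.
Proof. induction l; simpl; [ring| rewrite IHl; ring]. Qed.

Lemma lsum_swap (F: nat -> nat -> R) l1 l2 :
  lsum (fun p => lsum (fun m => F p m) l2) l1 = lsum (fun m => lsum (fun p => F p m) l1) l2.
Proof.
  induction l1; simpl.
  - rewrite lsum_zero; reflexivity.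
  - rewrite IHl1. rewrite <- lsum_plus. reflexivity.
Qed.

Lemma lsum_nonneg f l : (forall m, In m l -> 0 <= f m) -> 0 <= lsum f l.
Proof. induction l; simpl; intros H; [lra|]. pose proof (H a (or_introl eq_refl)).
  assert (0 <= lsum f l) by (apply IHl; auto). lra. Qed.

Definition fsum (F : list nat -> R) (L : list (list nat)) : R :=
  fold_right (fun I acc => F I + acc) 0 L.

Lemma fsum_app F l1 l2 : fsum F (l1++l2) = fsum F l1 + fsum F l2.
Proof. induction l1; simpl; [ring| unfold fsum in *; simpl; rewrite IHl1; ring]. Qed.

Lemma fsum_flat_map F (h : nat -> list (list nat)) l :
  fsum F (flat_map h l) = lsum (fun p => fsum F (h p)) l.
Proof. induction l; simpl; [reflexivity|]. rewrite fsum_app, IHl. reflexivity. Qed.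

Lemma fsum_map F (h : list nat -> list nat) L : fsum F (map h L) = fsum (fun I => F (h I)) L.
Proof. induction L; simpl; [reflexivity|]. unfold fsum in *; simpl. rewrite IHL. reflexivity. Qed.

Lemma fsum_lsum (F : list nat -> nat -> R) L l :
  fsum (fun I => lsum (F I) l) L = lsum (fun m => fsum (fun I => F I m) L) l.
Proof.
  induction L; simpl.
  - unfold fsum; simpl. rewrite lsum_zero; reflexivity.
  - unfold fsum in *; simpl. rewrite IHL. rewrite <- lsum_plus. reflexivity.
Qed.

Lemma fsum_scal c F L : fsum (fun I => c * F I) L = c * fsum F L.
Proof. induction L; unfold fsum in *; simpl; [ring| rewrite IHL; ring]. Qed.

Definition G (w k a J : nat) : R := fsum (fun I => Mfrom I a J) (comps w k).

Lemma Nsum_G n k j : Nsum n k j = G n k 0 j.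
Proof. reflexivity. Qed.

Lemma Grec w k a J :
  G w (S k) a J = lsum (fun p => lsum (fun m => / (INR m ^ p) * G (w - p) k m J)
                                 (seq (S a) (J - a))) (seq 1 w).
Proof.
  unfold G. simpl comps. rewrite fsum_flat_map. apply lsum_ext. intros p _.
  rewrite fsum_map. simpl Mfrom.
  rewrite fsum_lsum. apply lsum_ext. intros m _. apply fsum_scal.
Qed.

Lemma flat_map_nil {A B} (f : A -> list B) l : (forall x, In x l -> f x = []) -> flat_map f l = [].
Proof. induction l; simpl; intros H; auto. rewrite H by auto. simpl. apply IHl; auto. Qed.

Lemma comps_lt k : forall w, (w < k)%nat -> comps w k = [].
Proof.
  induction k; intros w Hw; [lia|]. simpl. apply flat_map_nil. intros p Hp.
  apply in_seq in Hp. rewrite IHk by lia. reflexivity.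
Qed.

Lemma G_lt w k a J : (w < k)%nat -> G w k a J = 0.
Proof. intros H. unfold G. rewrite comps_lt by exact H. reflexivity. Qed.

Lemma G_0 w a J : G w 0 a J = if Nat.eqb w 0 then 1 else 0.
Proof. destruct w; unfold G, fsum; simpl; ring. Qed.

Lemma Mfrom_nonneg I : forall a J, 0 <= Mfrom I a J.
Proof.
  induction I; intros; simpl; [lra|]. apply lsum_nonneg. intros m Hm. apply in_seq in Hm.
  apply Rmult_le_pos; [|apply IHI]. left. apply Rinv_0_lt_compat. apply pow_lt.
  apply lt_0_INR; lia.
Qed.

Lemma fsum_nonneg F L : (forall I, 0 <= F I) -> 0 <= fsum F L.
Proof. intros H; induction L; unfold fsum in *; simpl; [lra|]. specialize (H a). lra. Qed.

Lemma G_nonneg w k a J : 0 <= G w k a J.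
Proof. apply fsum_nonneg. intros; apply Mfrom_nonneg. Qed.

Lemma lsum_cons f a l : lsum f (a::l) = f a + lsum f l.
Proof. reflexivity. Qed.

Fixpoint dmul (n:R) (c:nat->R) (s:nat) : R :=
  match s with 0 => c 0%nat / n | S s' => (c (S s') + dmul n c s') / n end.

Definition Tp (k m J w : nat) : R := lsum (fun p => / INR m ^ p * G (w - p) k m J) (seq 1 w).

Lemma Tp_S k m J w : (1 <= m)%nat -> Tp k m J (S w) = (G w k m J + Tp k m J w) / INR m.
Proof.
  intros Hm. assert (Hm' : INR m <> 0) by (apply not_0_INR; lia).
  unfold Tp. change (seq 1 (S w)) with (1%nat :: seq 2 w). rewrite lsum_cons.
  rewrite <- seq_shift, lsum_map.
  replace (lsum (fun m0 : nat => / INR m ^ S m0 * G (S w - S m0) k m J) (seq 1 w))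
    with (/ INR m * lsum (fun p => / INR m ^ p * G (w - p) k m J) (seq 1 w)).
  2:{ rewrite <- lsum_scal. apply lsum_ext. intros p _. simpl (S w - S p)%nat.
      simpl pow. rewrite Rinv_mult. ring. }
  replace (S w - 1)%nat with w by lia. simpl pow. unfold Rdiv. rewrite Rmult_1_r. ring.
Qed.

Lemma Tp_k k m J : Tp k m J k = 0.
Proof.
  unfold Tp. rewrite (lsum_ext _ (fun _ => 0)). apply lsum_zero.
  intros p Hp. apply in_seq in Hp. rewrite G_lt by lia. ring.
Qed.

Lemma Tp_dmul k m J s : (1 <= m)%nat ->
  Tp k m J (S (s + k)) = dmul (INR m) (fun t => G (t + k) k m J) s.
Proof.
  intros Hm. induction s.
  - simpl. rewrite Tp_S by exact Hm. rewrite Tp_k. simpl. unfold Rdiv. ring.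
  - rewrite Tp_S by exact Hm. simpl (S s + k)%nat. rewrite IHs. simpl. reflexivity.
Qed.

Definition PS (c : nat -> R) (x v : R) := infinite_sum (fun s => c s * x ^ s) v.

Lemma Un_cv_shift u l : Un_cv u l -> Un_cv (fun n => u (S n)) l.
Proof. intros H e He. destruct (H e He) as [N HN]. exists N. intros n Hn. apply HN. lia. Qed.

Lemma Un_cv_const c : Un_cv (fun _ => c) c.
Proof. intros e He. exists 0%nat. intros. unfold Rdist. rewrite Rminus_diag, Rabs_R0. lra. Qed.

Lemma Un_cv_ext u v l : (forall n, u n = v n) -> Un_cv u l -> Un_cv v l.
Proof. intros E H e He. destruct (H e He) as [N HN]. exists N. intros. rewrite <- E. auto. Qed.

Lemma Un_cv_ext_ev u v l N0 : (forall n, (N0 <= n)%nat -> u n = v n) -> Un_cv u l -> Un_cv v l.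
Proof. intros E H e He. destruct (H e He) as [N HN]. exists (max N N0). intros.
  rewrite <- E by lia. apply HN; lia. Qed.

Lemma growing_le_lim u l : Un_growing u -> Un_cv u l -> forall n, u n <= l.
Proof. intros. apply growing_ineq; auto. Qed.

Lemma psum_growing a : (forall s, 0 <= a s) -> Un_growing (fun N => sum_f_R0 a N).
Proof. intros H n. simpl. specialize (H (S n)). lra. Qed.

Lemma psum_le a l : (forall s, 0 <= a s) -> infinite_sum a l -> forall N, sum_f_R0 a N <= l.
Proof. intros H1 H2 N. apply (growing_le_lim (fun N => sum_f_R0 a N)); auto. apply psum_growing; auto. Qed.

Lemma term_le a l : (forall s, 0 <= a s) -> infinite_sum a l -> forall N, a N <= l.
Proof. intros H1 H2 N. apply Rle_trans with (sum_f_R0 a N); [|apply psum_le; auto].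
  destruct N; simpl; [lra|]. assert (0 <= sum_f_R0 a N) by (apply cond_pos_sum; auto). lra. Qed.

Lemma uniq_sum a l1 l2 : infinite_sum a l1 -> infinite_sum a l2 -> l1 = l2.
Proof. intros. eapply UL_sequence; eauto. Qed.

Lemma bounded_growing_cv u B : Un_growing u -> (forall n, u n <= B) -> {l | Un_cv u l}.
Proof. intros H1 H2. apply growing_cv; auto. exists B. intros y [n ->]. auto. Qed.

Lemma sum_cv_bounded a B : (forall s, 0 <= a s) -> (forall N, sum_f_R0 a N <= B) -> {l | infinite_sum a l}.
Proof. intros. destruct (bounded_growing_cv (fun N => sum_f_R0 a N) B) as [l Hl]; auto.
  apply psum_growing; auto. exists l; exact Hl. Qed.

Lemma infinite_sum_plus a b la lb : infinite_sum a la -> infinite_sum b lb ->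
  infinite_sum (fun s => a s + b s) (la + lb).
Proof. intros Ha Hb. apply (Un_cv_ext (fun N => sum_f_R0 a N + sum_f_R0 b N)).
  intros; rewrite plus_sum; reflexivity. apply CV_plus; auto. Qed.

Lemma infinite_sum_scal c a la : infinite_sum a la -> infinite_sum (fun s => c * a s) (c * la).
Proof. intros Ha. apply (Un_cv_ext (fun N => c * sum_f_R0 a N)).
  intros; rewrite scal_sum. apply sum_eq; intros; ring.
  apply CV_mult; auto. apply Un_cv_const. Qed.

Lemma infinite_sum_zero : infinite_sum (fun _ => 0) 0.
Proof. apply (Un_cv_ext (fun _ => 0)). intros n; induction n; simpl; lra. apply Un_cv_const. Qed.

Lemma infinite_sum_ext a b l : (forall s, a s = b s) -> infinite_sum a l -> infinite_sum b l.
Proof. intros E H. apply (Un_cv_ext (fun N => sum_f_R0 a N)); auto. intros; apply sum_eq; auto. Qed.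

Lemma dmul_nonneg n c : 0 < n -> (forall s, 0 <= c s) -> forall s, 0 <= dmul n c s.
Proof. intros Hn Hc s; induction s; simpl; unfold Rdiv.
  - apply Rmult_le_pos; [auto| left; apply Rinv_0_lt_compat; auto].
  - apply Rmult_le_pos; [specialize (Hc (S s)); lra| left; apply Rinv_0_lt_compat; auto]. Qed.

Lemma PS_dmul n c x v : 0 <= x -> x < n -> (forall s, 0 <= c s) -> PS c x v ->
  PS (dmul n c) x (v / (n - x)).
Proof.
  intros Hx Hxn Hc Hv. unfold PS in *.
  set (D := fun N => sum_f_R0 (fun s => dmul n c s * x ^ s) N).
  set (C := fun N => sum_f_R0 (fun s => c s * x ^ s) N).
  assert (Hn : 0 < n) by lra.
  assert (Hd : forall s, 0 <= dmul n c s * x ^ s).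
  { intros; apply Rmult_le_pos; [apply dmul_nonneg; auto| apply pow_le; auto]. }
  assert (Hc' : forall s, 0 <= c s * x ^ s).
  { intros; apply Rmult_le_pos; [auto| apply pow_le; auto]. }
  assert (Rec : forall N, D (S N) = C (S N) / n + x / n * D N).
  { induction N.
    - unfold D, C; simpl. field. lra.
    - transitivity (D (S N) + dmul n c (S (S N)) * x ^ (S (S N))); [reflexivity|].
      rewrite IHN at 1.
      change (C (S (S N))) with (C (S N) + c (S (S N)) * x ^ (S (S N))).
      change (D (S N)) with (D N + dmul n c (S N) * x ^ (S N)).
      change (dmul n c (S (S N))) with ((c (S (S N)) + dmul n c (S N)) / n).
      simpl pow. field. lra. }
  assert (HC : forall N, C N <= v) by (intros; apply psum_le; auto).
  assert (HDg : Un_growing D) by (apply psum_growing; auto).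
  assert (Hle : forall N, D N * (n - x) <= C N).
  { intros [|N].
    - unfold D, C; simpl. assert (0 <= c 0%nat * 1) by (specialize (Hc 0%nat); lra).
      replace (c 0%nat / n * 1 * (n - x)) with (c 0%nat * 1 - c 0%nat * 1 * x / n) by (field; lra).
      assert (0 <= c 0%nat * 1 * x / n).
      { apply Rmult_le_pos; [apply Rmult_le_pos; lra| left; apply Rinv_0_lt_compat; lra]. }
      lra.
    - pose proof (HDg N). pose proof (Rec N).
      assert (E3: D (S N) * n = C (S N) + x * D N) by (rewrite H0; field; lra).
      assert (x * D N <= x * D (S N)) by (apply Rmult_le_compat_l; lra).
      nra. }
  assert (HD : forall N, D N <= v / (n - x)).
  { intros N. apply Rmult_le_reg_r with (n - x); [lra|]. unfold Rdiv.
    rewrite Rmult_assoc, Rinv_l by lra. rewrite Rmult_1_r. specialize (Hle N). specialize (HC N). lra. }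
  destruct (bounded_growing_cv D _ HDg HD) as [l Hl].
  assert (HCv : Un_cv C v) by exact Hv.
  assert (Hl2 : Un_cv (fun N => C (S N) / n + x / n * D N) (v / n + x / n * l)).
  { apply CV_plus.
    - apply (Un_cv_ext (fun N => C (S N) * / n)); [intros; reflexivity|].
      apply CV_mult; [apply Un_cv_shift; auto| apply Un_cv_const].
    - apply CV_mult; [apply Un_cv_const| auto]. }
  assert (Hl3 : Un_cv (fun N => C (S N) / n + x / n * D N) l).
  { apply (Un_cv_ext (fun N => D (S N))); [intros; apply Rec|]. apply Un_cv_shift; auto. }
  assert (Eq : l = v / n + x / n * l) by (eapply UL_sequence; eauto).
  replace (v / (n - x)) with l; [exact Hl|].
  apply Rmult_eq_reg_r with (n - x); [|lra]. unfold Rdiv. rewrite Rmult_assoc, Rinv_l by lra.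
  rewrite Rmult_1_r. assert (E4 : l * n = v + x * l) by (rewrite Eq at 1; field; lra). lra.
Qed.

Definition g (x : R) (n : nat) : R := / (INR n - x).

Fixpoint Qb (x : R) (k a J : nat) : R :=
  match k with
  | 0 => 1
  | S k' => lsum (fun m => g x m * Qb x k' m J) (seq (S a) (J - a))
  end.

Lemma PS_plus a b x u v : PS a x u -> PS b x v -> PS (fun s => a s + b s) x (u + v).
Proof. intros. unfold PS. eapply infinite_sum_ext; [|apply infinite_sum_plus; eauto].
  intros; simpl; ring. Qed.

Lemma PS_scal c a x u : PS a x u -> PS (fun s => c * a s) x (c * u).
Proof. intros. unfold PS. eapply infinite_sum_ext; [|apply infinite_sum_scal; eauto].
  intros; simpl; ring. Qed.

Lemma PS_zero x : PS (fun _ => 0) x 0.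
Proof. unfold PS. eapply infinite_sum_ext; [|apply infinite_sum_zero]. intros; simpl; ring. Qed.

Lemma PS_ext a b x u : (forall s, a s = b s) -> PS a x u -> PS b x u.
Proof. intros E H. unfold PS in *. eapply infinite_sum_ext; [|eauto]. intros; simpl; rewrite E; ring. Qed.

Lemma PS_lsum (c : nat -> nat -> R) (v : nat -> R) x l :
  (forall m, In m l -> PS (c m) x (v m)) -> PS (fun s => lsum (fun m => c m s) l) x (lsum v l).
Proof.
  induction l; intros H; simpl.
  - apply PS_zero.
  - apply PS_plus; [apply H; left; reflexivity| apply IHl; intros; apply H; right; auto].
Qed.

Lemma PS_delta x : PS (fun s => if Nat.eqb s 0 then 1 else 0) x 1.
Proof.
  unfold PS. apply (Un_cv_ext (fun _ => 1)); [|apply Un_cv_const].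
  intros n; induction n; simpl; [ring|]. rewrite <- IHn. ring.
Qed.

Lemma PS_Qb x : 0 <= x < 1 -> forall k a J, PS (fun s => G (s + k) k a J) x (Qb x k a J).
Proof.
  intros Hx. induction k; intros a J.
  - simpl. eapply PS_ext; [|apply PS_delta]. intros s. rewrite G_0.
    replace (s + 0)%nat with s by lia. reflexivity.
  - simpl Qb.
    apply PS_ext with (a := fun s => lsum (fun m => dmul (INR m) (fun t => G (t + k) k m J) s)
                                      (seq (S a) (J - a))).
    + intros s. rewrite Grec. rewrite lsum_swap. apply lsum_ext. intros m Hm.
      apply in_seq in Hm. rewrite <- Tp_dmul by lia. unfold Tp.
      replace (S (s + k)) with (s + S k)%nat by lia. reflexivity.
    + apply PS_lsum. intros m Hm. apply in_seq in Hm.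
      assert (Hm1 : 1 <= INR m) by (apply (le_INR 1); lia).
      replace (g x m * Qb x k m J) with (Qb x k m J / (INR m - x)) by (unfold g, Rdiv; ring).
      apply PS_dmul; [lra | lra | intros; apply G_nonneg | apply IHk].
Qed.

Lemma Qb_S x k a J : Qb x (S k) a J = lsum (fun m => g x m * Qb x k m J) (seq (S a) (J - a)).
Proof. reflexivity. Qed.

Lemma Qb_top x k J : Qb x (S k) (S J) (S J) = 0.
Proof. rewrite Qb_S. replace (S J - S J)%nat with 0%nat by lia. reflexivity. Qed.

Lemma Qb_step x k : forall a J, (a <= J)%nat ->
  Qb x (S k) a (S J) = Qb x (S k) a J + g x (S J) * Qb x k a J.
Proof.
  induction k; intros a J Ha.
  - rewrite !Qb_S. replace (S J - a)%nat with (S (J - a)) by lia. rewrite seq_S, lsum_app.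
    replace (S a + (J - a))%nat with (S J) by lia. simpl. ring.
  - rewrite (Qb_S x (S k) a (S J)). replace (S J - a)%nat with (S (J - a)) by lia. rewrite seq_S, lsum_app.
    replace (S a + (J - a))%nat with (S J) by lia. change (lsum ?f [S J]) with (f (S J) + 0); cbv beta.
    rewrite Qb_top.
    rewrite (lsum_ext _ (fun m => g x m * Qb x (S k) m J + g x (S J) * (g x m * Qb x k m J))).
    + rewrite lsum_plus, lsum_scal. rewrite <- !Qb_S. ring.
    + intros m Hm. apply in_seq in Hm. rewrite IHk by lia. ring.
Qed.

Definition Rb x k J := Qb x k 0 J.

Lemma Rb_0 x J : Rb x 0 J = 1. Proof. reflexivity. Qed.
Lemma Rb_S0 x k : Rb x (S k) 0 = 0. Proof. reflexivity. Qed.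
Lemma Rb_SS x k J : Rb x (S k) (S J) = Rb x (S k) J + g x (S J) * Rb x k J.
Proof. unfold Rb. apply Qb_step. lia. Qed.

Lemma g_pos x n : x < 1 -> (1 <= n)%nat -> 0 < g x n.
Proof. intros. unfold g. apply Rinv_0_lt_compat. assert (1 <= INR n) by (apply (le_INR 1); auto). lra. Qed.

Lemma Qb_nonneg x k : x < 1 -> forall a J, 0 <= Qb x k a J.
Proof. intros Hx; induction k; intros; simpl; [lra|]. apply lsum_nonneg. intros m Hm.
  apply in_seq in Hm. apply Rmult_le_pos; [left; apply g_pos; auto; lia| auto]. Qed.

Lemma Rb_nonneg x k J : x < 1 -> 0 <= Rb x k J.
Proof. intros; apply Qb_nonneg; auto. Qed.

Section X.
Variable x : R.
Hypothesis Hx : 0 <= x <= 1/2.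

Lemma INR_x n : (1 <= n)%nat -> INR n - x > 0.
Proof. intros. assert (1 <= INR n) by (apply (le_INR 1); auto). lra. Qed.

Fixpoint Cc (N m : nat) : R :=
  match m with 0 => 1 | S m' => Cc N m' * INR (S m') * g x (N + S m') end.

Lemma Cc_S N m : Cc N (S m) = Cc N m * INR (S m) * g x (N + S m).
Proof. reflexivity. Qed.
Lemma Cc_0 N : Cc N 0 = 1.
Proof. reflexivity. Qed.

Lemma Cc_pos N m : 0 < Cc N m.
Proof. induction m; [rewrite Cc_0; lra|]. rewrite Cc_S. apply Rmult_lt_0_compat; [apply Rmult_lt_0_compat|].
  auto. apply lt_0_INR; lia. apply g_pos; lra || lia. Qed.

Lemma Cc_shift N m : Cc N m = Cc (S N) m * (1 + INR m * g x (S N)).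
Proof.
  induction m; [rewrite !Cc_0; simpl; ring|]. rewrite !Cc_S, IHm.
  unfold g. pose proof (INR_x (S N) ltac:(lia)). pose proof (INR_x (N + S m) ltac:(lia)).
  pose proof (INR_x (S N + S m) ltac:(lia)).
  rewrite !plus_INR, !S_INR in *. field. repeat split; lra.
Qed.

Lemma Cc_diff N m : Cc N m - Cc (S N) m = INR m * g x (S N) * Cc (S N) m.
Proof. rewrite Cc_shift. ring. Qed.

Fixpoint Err (k J m : nat) : R :=
  match k with 0 => / INR m | S k' => (Err k' J m + Rb x (S k') J) / INR m end.

Fixpoint A (k J m : nat) : R :=
  match J with 0 => 0 | S J' => A k J' m + g x (S J') * Cc (S J') m * Rb x k J' end.

Lemma Err_step k J m : (1 <= m)%nat ->
  Cc J m * Err k J m - Cc (S J) m * Err k (S J) m = g x (S J) * Cc (S J) m * Rb x k J.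
Proof.
  intros Hm. assert (Hm' : INR m <> 0) by (apply not_0_INR; lia).
  induction k; simpl Err.
  - rewrite Rb_0. pose proof (Cc_diff J m). unfold Rdiv.
    replace (Cc J m * / INR m - Cc (S J) m * / INR m) with ((Cc J m - Cc (S J) m) / INR m) by (field; auto).
    rewrite H. field. auto.
  - rewrite Rb_SS. pose proof (Cc_diff J m) as D.
    replace (Cc J m * ((Err k J m + Rb x (S k) J) / INR m) -
             Cc (S J) m * ((Err k (S J) m + (Rb x (S k) J + g x (S J) * Rb x k J)) / INR m))
      with ((Cc J m * Err k J m - Cc (S J) m * Err k (S J) m + (Cc J m - Cc (S J) m) * Rb x (S k) J
             - Cc (S J) m * g x (S J) * Rb x k J) / INR m) by (field; auto).
    rewrite IHk, D. field. auto.
Qed.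

Lemma Err_0 k m : (1 <= m)%nat -> Err k 0 m = / INR m ^ (S k).
Proof.
  intros Hm. assert (Hm' : INR m <> 0) by (apply not_0_INR; lia).
  induction k; simpl Err.
  - simpl. field. auto.
  - rewrite IHk, Rb_S0. simpl pow. field. split; auto. apply pow_nonzero; auto.
Qed.

Lemma A_closed k J m : (1 <= m)%nat -> A k J m = Cc 0 m / INR m ^ (S k) - Cc J m * Err k J m.
Proof.
  intros Hm. induction J; simpl A.
  - rewrite Err_0 by auto. unfold Rdiv. ring.
  - rewrite IHJ. pose proof (Err_step k J m Hm). lra.
Qed.

Fixpoint Phi (k L : nat) : R :=
  match L with 0 => 0 | S L' => Phi k L' + g x (S L') * Rb x k L' / INR (S L') end.

Definition fw (m : nat) : R := g x m / Cc 0 m.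
Definition K (N m : nat) : R := fw m * Cc N m.
Definition Beta (N m : nat) : R := Cc N m / Cc 0 m.

Lemma Beta_step N m : Beta N m - Beta N (S m) = INR N * K N (S m).
Proof.
  unfold Beta, K, fw. rewrite !Cc_S. unfold g. pose proof (Cc_pos 0 m). pose proof (Cc_pos N m).
  pose proof (INR_x (S m) ltac:(lia)). pose proof (INR_x (N + S m) ltac:(lia)).
  pose proof (INR_x (0 + S m) ltac:(lia)).
  simpl (0 + S m)%nat in *. rewrite !plus_INR, !S_INR in *. field.
  repeat split; try lra. 
Qed.
End X.

Lemma squeeze0 u v N0 : (forall n, (N0 <= n)%nat -> 0 <= u n <= v n) -> Un_cv v 0 -> Un_cv u 0.
Proof.
  intros H Hv e He. destruct (Hv e He) as [N HN]. exists (max N N0). intros n Hn.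
  specialize (HN n ltac:(lia)). specialize (H n ltac:(lia)). unfold Rdist in *.
  rewrite Rminus_0_r in *. rewrite Rabs_right in * by lra. lra.
Qed.

Lemma inv_cv0 : Un_cv (fun n => / INR (S n)) 0.
Proof.
  intros e He. destruct (INR_unbounded (/ e)) as [N HN]. exists N. intros n Hn.
  unfold Rdist. rewrite Rminus_0_r. assert (0 < INR (S n)) by (apply lt_0_INR; lia).
  rewrite Rabs_right by (left; apply Rinv_0_lt_compat; auto).
  assert (INR N <= INR (S n)) by (apply le_INR; lia).
  apply Rmult_lt_reg_l with (INR (S n)); auto. rewrite Rinv_r by lra.
  assert (/ e * e = 1) by (field; lra).
  assert (INR (S n) * e > / e * e) by (apply Rmult_gt_compat_r; lra). lra.
Qed.

Section X.
Variable x : R.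
Hypothesis Hx : 0 <= x <= 1/2.

Lemma Beta_0 N : Beta x N 0 = 1.
Proof. unfold Beta. rewrite !Cc_0. field. Qed.

Lemma Beta_S N m : Beta x N (S m) = Beta x N m * (INR (S m) - x) / (INR (N + S m) - x).
Proof.
  unfold Beta. rewrite !Cc_S. unfold g. pose proof (Cc_pos x Hx 0 m). pose proof (Cc_pos x Hx N m).
  pose proof (INR_x x Hx (S m) ltac:(lia)). pose proof (INR_x x Hx (N + S m) ltac:(lia)).
  simpl (0 + S m)%nat. field. repeat split; try lra.
Qed.

Lemma Beta_pos N m : 0 < Beta x N m.
Proof. unfold Beta. pose proof (Cc_pos x Hx 0 m). pose proof (Cc_pos x Hx N m).
  apply Rmult_lt_0_compat; auto. apply Rinv_0_lt_compat; auto. Qed.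

Lemma Beta_le N m : (1 <= N)%nat -> Beta x N m <= / INR (S m).
Proof.
  intros HN. induction m.
  - rewrite Beta_0. simpl. lra.
  - rewrite Beta_S. pose proof (Beta_pos N m).
    assert (HS : INR (S (S m)) = INR (S m) + 1) by (rewrite S_INR; ring).
    assert (HNm : INR (N + S m) = INR N + INR (S m)) by (rewrite plus_INR; ring).
    assert (1 <= INR N) by (apply (le_INR 1); auto).
    assert (1 <= INR (S m)) by (apply (le_INR 1); lia).
    rewrite HS, HNm.
    apply Rle_trans with (/ INR (S m) * ((INR (S m) - x) / (INR N + INR (S m) - x))).
    + unfold Rdiv. rewrite Rmult_assoc. apply Rmult_le_compat_r; auto.
      apply Rmult_le_pos; [lra| left; apply Rinv_0_lt_compat; lra].
    + apply Rmult_le_reg_l with ((INR (S m) + 1) * INR (S m) * (INR N + INR (S m) - x)).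
      { apply Rmult_lt_0_compat; [apply Rmult_lt_0_compat|]; lra. }
      replace ((INR (S m) + 1) * INR (S m) * (INR N + INR (S m) - x) *
               (/ INR (S m) * ((INR (S m) - x) / (INR N + INR (S m) - x))))
        with ((INR (S m) + 1) * (INR (S m) - x)) by (field; lra).
      replace ((INR (S m) + 1) * INR (S m) * (INR N + INR (S m) - x) * / (INR (S m) + 1))
        with (INR (S m) * (INR N + INR (S m) - x)) by (field; lra).
      nra.
Qed.

Lemma fw_pos m : (1 <= m)%nat -> 0 < fw x m.
Proof. intros. unfold fw. pose proof (Cc_pos x Hx 0 m). apply Rmult_lt_0_compat.
  apply g_pos; auto; lra. apply Rinv_0_lt_compat; auto. Qed.

Lemma K_pos N m : (1 <= m)%nat -> 0 < K x N m.
Proof. intros. unfold K. apply Rmult_lt_0_compat; [apply fw_pos; auto| apply Cc_pos; auto]. Qed.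

Lemma K_sum N M : (1 <= N)%nat -> sum_f_R0 (fun m => K x N (S m)) M = (1 - Beta x N (S M)) / INR N.
Proof.
  intros HN. assert (INR N <> 0) by (apply not_0_INR; lia).
  induction M.
  - simpl sum_f_R0. pose proof (Beta_step x Hx N 0). rewrite Beta_0 in H0. rewrite H0. field. auto.
  - rewrite tech5, IHM. pose proof (Beta_step x Hx N (S M)).
    assert (K x N (S (S M)) = (Beta x N (S M) - Beta x N (S (S M))) / INR N) by (rewrite H0; field; auto).
    rewrite H1. field. auto.
Qed.

Lemma K_series N : (1 <= N)%nat -> infinite_sum (fun m => K x N (S m)) (/ INR N).
Proof.
  intros HN. assert (INR N <> 0) by (apply not_0_INR; lia).
  apply (Un_cv_ext (fun M => (1 - Beta x N (S M)) / INR N)).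
  { intros; rewrite K_sum; auto. }
  replace (/ INR N) with ((1 - 0) * / INR N) by ring.
  apply CV_mult; [|apply Un_cv_const]. apply CV_minus; [apply Un_cv_const|].
  apply (squeeze0 _ (fun n => / INR (S n)) 0).
  - intros n _. split; [left; apply Beta_pos|].
    apply Rle_trans with (/ INR (S (S n))); [apply Beta_le; auto|].
    apply Rinv_le_contravar; [apply lt_0_INR; lia| apply le_INR; lia].
  - apply inv_cv0.
Qed.

Lemma PhiA k L : infinite_sum (fun m => fw x (S m) * A x k L (S m)) (Phi x k L).
Proof.
  induction L.
  - simpl. eapply infinite_sum_ext; [|apply infinite_sum_zero]. intros; simpl; ring.
  - change (Phi x k (S L)) with (Phi x k L + g x (S L) * Rb x k L / INR (S L)).
    eapply infinite_sum_ext; [| apply infinite_sum_plus;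
      [exact IHL | apply (infinite_sum_scal (g x (S L) * Rb x k L)); apply K_series; lia]].
    intros m. cbn [A]. unfold K, Rdiv. ring.
Qed.

Fixpoint Sb (k L : nat) : R := match k with 0 => 1 | S k' => Sb k' L + Rb x (S k') L end.

Lemma Err_bound k L m : (1 <= m)%nat -> 0 <= Err x k L m <= Sb k L.
Proof.
  intros Hm. assert (1 <= INR m) by (apply (le_INR 1); auto).
  induction k; simpl Err; simpl Sb.
  - split; [left; apply Rinv_0_lt_compat; lra|]. rewrite <- Rinv_1. apply Rinv_le_contravar; lra.
  - pose proof (Rb_nonneg x (S k) L ltac:(lra)).
    assert (0 <= (Err x k L m + Rb x (S k) L)) by lra.
    split. apply Rmult_le_pos; [lra| left; apply Rinv_0_lt_compat; lra].
    apply Rle_trans with (Err x k L m + Rb x (S k) L); [|lra].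
    unfold Rdiv. rewrite <- (Rmult_1_r (Err x k L m + Rb x (S k) L)) at 2.
    apply Rmult_le_compat_l; auto. rewrite <- Rinv_1. apply Rinv_le_contravar; lra.
Qed.

Lemma eps_series k L : (1 <= L)%nat ->
  exists e, infinite_sum (fun m => K x L (S m) * Err x k L (S m)) e /\ 0 <= e <= Sb k L / INR L.
Proof.
  intros HL. assert (0 < INR L) by (apply lt_0_INR; lia).
  assert (Hnn : forall m, 0 <= K x L (S m) * Err x k L (S m)).
  { intros. apply Rmult_le_pos; [left; apply K_pos; lia| apply Err_bound; lia]. }
  assert (Hb : forall N, sum_f_R0 (fun m => K x L (S m) * Err x k L (S m)) N <= Sb k L / INR L).
  { intros N. apply Rle_trans with (sum_f_R0 (fun m => K x L (S m)) N * Sb k L).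
    - rewrite Rmult_comm, scal_sum. apply sum_Rle. intros. apply Rmult_le_compat_l; [left; apply K_pos; lia|].
      apply Err_bound; lia.
    - unfold Rdiv. rewrite Rmult_comm. apply Rmult_le_compat_l.
      + pose proof (Err_bound k L 1 ltac:(lia)). lra.
      + apply psum_le; [intros; left; apply K_pos; lia| apply K_series; auto]. }
  destruct (sum_cv_bounded _ _ Hnn Hb) as [e He]. exists e. split; auto. split.
  - apply Rle_trans with (sum_f_R0 (fun m => K x L (S m) * Err x k L (S m)) 0); [apply Hnn|].
    apply psum_le; auto.
  - eapply Rle_cv_lim; [exact Hb | exact He | apply Un_cv_const].
Qed.

Lemma fwA k L m : (1 <= m)%nat ->
  fw x m * A x k L m = g x m / INR m ^ (S k) - K x L m * Err x k L m.
Proof.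
  intros Hm. rewrite A_closed by auto. unfold K, fw. pose proof (Cc_pos x Hx 0 m).
  field. split; [lra| apply pow_nonzero; apply not_0_INR; lia].
Qed.

Lemma Phi_bound k : exists Rz, infinite_sum (fun m => g x (S m) / INR (S m) ^ (S k)) Rz /\
  forall L, (1 <= L)%nat -> Rz - Sb k L / INR L <= Phi x k L <= Rz.
Proof.
  assert (Hs : forall L, (1 <= L)%nat -> exists e,
     infinite_sum (fun m => g x (S m) / INR (S m) ^ (S k)) (Phi x k L + e) /\ 0 <= e <= Sb k L / INR L).
  { intros L HL. destruct (eps_series k L HL) as [e [He Hb]]. exists e. split; auto.
    eapply infinite_sum_ext; [| apply infinite_sum_plus; [apply (PhiA k L)| exact He]].
    intros m. cbv beta. rewrite fwA by lia. ring. }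
  destruct (Hs 1%nat (le_n _)) as [e1 [He1 _]]. exists (Phi x k 1 + e1). split; auto.
  intros L HL. destruct (Hs L HL) as [e [He Hb]].
  rewrite (uniq_sum _ _ _ He1 He). lra.
Qed.
End X.

Section X.
Variable x : R.
Hypothesis Hx : 0 <= x <= 1/2.

Fixpoint Pg (J : nat) : R := match J with 0 => 1 | S J' => Pg J' * (1 + g x (S J') / 2) end.

Lemma g_le n : (1 <= n)%nat -> g x n <= / (INR n - 1/2).
Proof. intros. unfold g. assert (1 <= INR n) by (apply (le_INR 1); auto).
  apply Rinv_le_contravar; lra. Qed.

Lemma Pg_ge1 J : 1 <= Pg J.
Proof. induction J; simpl; [lra|]. pose proof (g_pos x (S J) ltac:(lra) ltac:(lia)).
  assert (1 <= 1 + g x (S J) / 2) by lra. nra. Qed.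

Lemma Rb_le k J : Rb x k J <= 2 ^ k * Pg J.
Proof.
  revert k. induction J; intros k.
  - destruct k; [rewrite Rb_0; simpl; lra| rewrite Rb_S0].
    apply Rmult_le_pos; [left; apply pow_lt; lra| pose proof (Pg_ge1 0); lra].
  - destruct k.
    + rewrite Rb_0. pose proof (Pg_ge1 (S J)). rewrite pow_O, Rmult_1_l; lra.
    + rewrite Rb_SS. pose proof (IHJ (S k)). pose proof (IHJ k).
      pose proof (g_pos x (S J) ltac:(lra) ltac:(lia)).
      change (Pg (S J)) with (Pg J * (1 + g x (S J) / 2)).
      assert (g x (S J) * Rb x k J <= g x (S J) * (2 ^ k * Pg J)) by (apply Rmult_le_compat_l; lra).
      replace (2 ^ S k * (Pg J * (1 + g x (S J) / 2))) with (2 ^ S k * Pg J + g x (S J) * (2 ^ k * Pg J))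
        by (simpl; field). lra.
Qed.

Lemma Pg_sq J : Pg (S J) ^ 2 <= 4 * INR (S J).
Proof.
  induction J.
  - simpl Pg. pose proof (g_le 1 (le_n _)). pose proof (g_pos x 1 ltac:(lra) ltac:(lia)).
    simpl INR in *. assert (g x 1 <= 2) by (apply Rle_trans with (/ (1 - 1/2)); [auto| lra]).
    nra.
  - change (Pg (S (S J))) with (Pg (S J) * (1 + g x (S (S J)) / 2)).
    pose proof (g_le (S (S J)) ltac:(lia)). pose proof (g_pos x (S (S J)) ltac:(lra) ltac:(lia)).
    set (t := g x (S (S J))) in *. set (u := Pg (S J)) in *.
    rewrite !S_INR in H, IHJ |- *. rewrite S_INR in H.
    set (j := INR J) in *. assert (0 <= j) by apply pos_INR.
    assert (Ht : t * (2 * j + 3) <= 2).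
    { apply Rle_trans with (/ (j + 1 + 1 - 1/2) * (2 * j + 3)).
      apply Rmult_le_compat_r; [lra|]. lra. right; field; lra. }
    assert (0 <= u) by (pose proof (Pg_ge1 (S J)); unfold u; lra).
    assert (Hq0 : 0 <= (1 + t/2) * (2*j+3) <= 2*j+4) by (split; nra).
    assert (Hq : (1 + t/2) ^ 2 * (2*j+3)^2 <= (2*j+4)^2).
    { replace ((1 + t/2) ^ 2 * (2*j+3)^2) with (((1 + t/2) * (2*j+3))^2) by ring.
      apply pow_incr. exact Hq0. }
    assert (Hr : (j + 1) * (2*j+4)^2 <= (j+2) * (2*j+3)^2) by nra.
    assert (Hs : (j+1) * (1 + t/2)^2 <= j + 2).
    { apply Rmult_le_reg_r with ((2*j+3)^2). nra. nra. }
    replace ((u * (1 + t / 2)) ^ 2) with (u^2 * (1 + t/2)^2) by ring.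
    assert (0 <= (1 + t/2)^2) by nra.
    apply Rle_trans with (4 * (j + 1) * (1 + t/2)^2); [apply Rmult_le_compat_r; auto|]. replace (4 * (j + 1) * (1 + t/2)^2) with (4 * ((j + 1) * (1 + t/2)^2)) by ring. rewrite S_INR. fold j. lra.
Qed.

Lemma Rb_div k : Un_cv (fun L => Rb x k L / INR L) 0.
Proof.
  intros e He. destruct (INR_unbounded (4 ^ (S k) / (e * e))) as [N HN].
  exists (S N). intros L HL. destruct L; [lia|].
  unfold Rdist. rewrite Rminus_0_r. assert (HL0 : 0 < INR (S L)) by (apply lt_0_INR; lia).
  assert (Hr : 0 <= Rb x k (S L) / INR (S L)).
  { apply Rmult_le_pos; [apply Rb_nonneg; lra| left; apply Rinv_0_lt_compat; auto]. }
  rewrite Rabs_right by lra.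
  pose proof (Rb_le k (S L)). pose proof (Pg_sq L). pose proof (Rb_nonneg x k (S L) ltac:(lra)).
  assert (INR N <= INR (S L)) by (apply le_INR; lia).
  set (r := Rb x k (S L)) in *. set (p := Pg (S L)) in *. set (l := INR (S L)) in *.
  assert (Hpos2 : 0 < 2 ^ k) by (apply pow_lt; lra).
  assert (Hr2 : r * r <= 4 ^ k * (4 * l)).
  { assert (r * r <= (2 ^ k * p) * (2 ^ k * p)) by (apply Rmult_le_compat; lra).
    replace ((2 ^ k * p) * (2 ^ k * p)) with ((2*2) ^ k * p ^ 2) in H3 by (rewrite Rpow_mult_distr; ring).
    replace (2 * 2) with 4 in H3 by ring.
    assert (0 < 4 ^ k) by (apply pow_lt; lra). nra. }
  assert (Hl : 4 ^ (S k) / (e * e) < l) by lra.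
  assert (He2 : 4 ^ (S k) < l * (e * e)).
  { apply Rmult_lt_reg_r with (/ (e * e)). apply Rinv_0_lt_compat; nra.
    replace (l * (e * e) * / (e * e)) with l by (field; lra). exact Hl. }
  simpl pow in He2.
  assert (Hq : (r / l) * (r / l) < e * e).
  { replace ((r / l) * (r / l)) with (r * r / (l * l)) by (field; lra).
    apply Rmult_lt_reg_r with (l * l). nra. replace (r * r / (l * l) * (l * l)) with (r * r) by (field; lra).
    nra. }
  nra.
Qed.

Lemma Sb_div k : Un_cv (fun L => Sb x k L / INR L) 0.
Proof.
  induction k; simpl Sb.
  - apply (Un_cv_ext (fun L => Rb x 0 L / INR L)); [intros; rewrite Rb_0; reflexivity| apply Rb_div].
  - replace 0 with (0 + 0) by ring.
    apply (Un_cv_ext (fun L => Sb x k L / INR L + Rb x (S k) L / INR L)); [intros; unfold Rdiv; ring|].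
    apply CV_plus; auto. apply Rb_div.
Qed.

Lemma Phi_cv k : exists Rz, infinite_sum (fun m => g x (S m) / INR (S m) ^ (S k)) Rz /\
  Un_cv (Phi x k) Rz.
Proof.
  destruct (Phi_bound x Hx k) as [Rz [HR Hb]]. exists Rz. split; auto.
  intros e He. destruct (Sb_div k e He) as [N HN]. exists (S N). intros L HL.
  specialize (Hb L ltac:(lia)). specialize (HN L ltac:(lia)). unfold Rdist in *.
  rewrite Rminus_0_r in HN. rewrite Rabs_left1 by lra. 
  assert (Sb x k L / INR L <= Rabs (Sb x k L / INR L)) by apply RRle_abs. lra.
Qed.
End X.

Section X.
Variable x : R.
Hypothesis Hx : 0 <= x <= 1/2.

Fixpoint Zs (k L : nat) : R :=
  match L with 0 => 0 | S L' => Zs k L' + Rb x k (S L') / (INR (S L' + 1) * INR (S L' + 2)) end.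
Fixpoint Ys (k L : nat) : R :=
  match L with 0 => 0 | S L' => Ys k L' + g x (S L') * Rb x k L' / INR (S L' + 1) end.

Lemma ZY k L : Zs (S k) L = Ys k L - Rb x (S k) L / INR (L + 2).
Proof.
  induction L.
  - simpl. rewrite Rb_S0. unfold Rdiv. ring.
  - change (Zs (S k) (S L)) with (Zs (S k) L + Rb x (S k) (S L) / (INR (S L + 1) * INR (S L + 2))).
    change (Ys k (S L)) with (Ys k L + g x (S L) * Rb x k L / INR (S L + 1)).
    rewrite IHL, Rb_SS. rewrite !plus_INR, !S_INR. simpl INR.
    assert (0 <= INR L) by apply pos_INR. field. lra.
Qed.

Lemma step_id L : (1 + x) * g x (S L) / INR (S L + 1) =
  x * g x (S L) / INR (S L) - 1 / INR (S L + 1) + 1 / INR (L + 1).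
Proof.
  unfold g. rewrite !plus_INR, !S_INR. simpl INR. assert (0 <= INR L) by apply pos_INR.
  field. lra.
Qed.

Lemma YPhi k L : (1 + x) * Ys (S k) L - Ys k L = x * Phi x (S k) L - Rb x (S k) L / INR (L + 1).
Proof.
  induction L.
  - simpl. rewrite Rb_S0. unfold Rdiv. ring.
  - change (Ys (S k) (S L)) with (Ys (S k) L + g x (S L) * Rb x (S k) L / INR (S L + 1)).
    change (Ys k (S L)) with (Ys k L + g x (S L) * Rb x k L / INR (S L + 1)).
    change (Phi x (S k) (S L)) with (Phi x (S k) L + g x (S L) * Rb x (S k) L / INR (S L)).
    rewrite Rb_SS. pose proof (step_id L).
    replace ((1 + x) * (Ys (S k) L + g x (S L) * Rb x (S k) L / INR (S L + 1)) -
      (Ys k L + g x (S L) * Rb x k L / INR (S L + 1)))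
      with (((1 + x) * Ys (S k) L - Ys k L) + ((1 + x) * g x (S L) / INR (S L + 1)) * Rb x (S k) L
            - g x (S L) * Rb x k L / INR (S L + 1)) by (unfold Rdiv; ring).
    rewrite IHL, H. unfold Rdiv. ring.
Qed.

Lemma YPhi0 L : (1 + x) * Ys 0 L - 1 = x * Phi x 0 L - 1 / INR (L + 1).
Proof.
  induction L.
  - simpl. field.
  - change (Ys 0 (S L)) with (Ys 0 L + g x (S L) * Rb x 0 L / INR (S L + 1)).
    change (Phi x 0 (S L)) with (Phi x 0 L + g x (S L) * Rb x 0 L / INR (S L)).
    rewrite !Rb_0. pose proof (step_id L).
    replace ((1 + x) * (Ys 0 L + g x (S L) * 1 / INR (S L + 1)) - 1)
      with (((1 + x) * Ys 0 L - 1) + (1 + x) * g x (S L) / INR (S L + 1)) by (unfold Rdiv; ring).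
    rewrite IHL, H. replace (S L + 1)%nat with (S (L + 1)) by lia. unfold Rdiv. ring.
Qed.

Lemma rem_cv j c : (1 <= c)%nat -> Un_cv (fun L => Rb x j L / INR (L + c)) 0.
Proof.
  intros Hc. apply (squeeze0 _ (fun L => Rb x j L / INR L) 1).
  - intros n Hn. assert (0 < INR n) by (apply lt_0_INR; lia).
    assert (INR n <= INR (n + c)) by (apply le_INR; lia).
    pose proof (Rb_nonneg x j n ltac:(lra)). split.
    + apply Rmult_le_pos; [lra| left; apply Rinv_0_lt_compat; lra].
    + unfold Rdiv. apply Rmult_le_compat_l; [lra|]. apply Rinv_le_contravar; lra.
  - apply Rb_div; auto.
Qed.

Lemma Zlim1 : exists w Rz, infinite_sum (fun m => g x (S m) / INR (S m) ^ 1) Rz /\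
  Un_cv (Zs 1) w /\ (1 + x) * w = 1 + x * Rz.
Proof.
  destruct (Phi_cv x Hx 0) as [Rz [HRz HPhi]].
  exists ((1 + x * Rz - 0 - (1 + x) * 0) / (1 + x)), Rz. split; auto. split; [|field; lra].
  apply (Un_cv_ext (fun L => (1 + x * Phi x 0 L - Rb x 0 L / INR (L + 1) - (1 + x) * (Rb x 1 L / INR (L + 2))) * / (1 + x))).
  - intros L. pose proof (ZY 0 L). pose proof (YPhi0 L). rewrite Rb_0.
    apply Rmult_eq_reg_l with (1 + x); [|lra]. rewrite <- Rmult_assoc, (Rmult_comm (1+x)), Rmult_assoc, Rinv_r, Rmult_1_r by lra. nra.
  - apply CV_mult; [|apply Un_cv_const]. apply CV_minus; [apply CV_minus|].
    + apply CV_plus; [apply Un_cv_const|]. apply CV_mult; [apply Un_cv_const| auto].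
    + apply rem_cv; lia.
    + apply CV_mult; [apply Un_cv_const| apply rem_cv; lia].
Qed.

Lemma ZlimS k w : Un_cv (Zs (S k)) w -> exists w' Rz,
  infinite_sum (fun m => g x (S m) / INR (S m) ^ (S (S k))) Rz /\
  Un_cv (Zs (S (S k))) w' /\ (1 + x) * w' - w = x * Rz.
Proof.
  intros Hw. destruct (Phi_cv x Hx (S k)) as [Rz [HRz HPhi]].
  exists ((w + x * Rz - 0 - (1 + x) * 0 + 0) / (1 + x)), Rz. split; auto. split; [|field; lra].
  apply (Un_cv_ext (fun L => (Zs (S k) L + x * Phi x (S k) L - Rb x (S k) L / INR (L + 1)
          - (1 + x) * (Rb x (S (S k)) L / INR (L + 2)) + Rb x (S k) L / INR (L + 2)) * / (1 + x))).
  - intros L. pose proof (ZY (S k) L). pose proof (ZY k L). pose proof (YPhi k L).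
    apply Rmult_eq_reg_l with (1 + x); [|lra]. rewrite <- Rmult_assoc, (Rmult_comm (1+x)), Rmult_assoc, Rinv_r, Rmult_1_r by lra. nra.
  - apply CV_mult; [|apply Un_cv_const]. apply CV_plus; [apply CV_minus; [apply CV_minus|]|].
    + apply CV_plus; [auto|]. apply CV_mult; [apply Un_cv_const| auto].
    + apply rem_cv; lia.
    + apply CV_mult; [apply Un_cv_const| apply rem_cv; lia].
    + apply rem_cv; lia.
Qed.
End X.

Lemma Un_cv_unshift u l : Un_cv (fun n => u (S n)) l -> Un_cv u l.
Proof. intros H e He. destruct (H e He) as [N HN]. exists (S N). intros n Hn.
  destruct n; [lia|]. apply HN. lia. Qed.

Lemma sum_S_decomp f N : sum_f_R0 f (S N) = f 0%nat + sum_f_R0 (fun i => f (S i)) N.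
Proof. induction N; simpl in *; [ring|]. rewrite IHN. ring. Qed.

Lemma sum_cv (a : nat -> nat -> R) (b : nat -> R) :
  (forall s, Un_cv (fun L => a L s) (b s)) -> forall N, Un_cv (fun L => sum_f_R0 (a L) N) (sum_f_R0 b N).
Proof. intros H N. induction N; simpl; auto. apply CV_plus; auto. Qed.

Lemma ML (a : nat -> nat -> R) (Ssum : nat -> R) (Sl : R) :
  (forall L s, 0 <= a L s) -> (forall L s, a L s <= a (S L) s) ->
  (forall L, infinite_sum (a L) (Ssum L)) -> Un_cv Ssum Sl ->
  exists b, (forall s, Un_cv (fun L => a L s) (b s)) /\ infinite_sum b Sl.
Proof.
  intros Hnn Hinc Hs HS.
  assert (HSg : Un_growing Ssum).
  { intros L. eapply Rle_cv_lim; [| apply (Hs L) | apply (Hs (S L))]. intros N.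
    apply sum_Rle. intros; auto. }
  assert (HSle : forall L, Ssum L <= Sl) by (apply growing_ineq; auto).
  assert (Hab : forall L s, a L s <= Sl).
  { intros. apply Rle_trans with (Ssum L); auto. apply term_le; auto. }
  assert (Hb : forall s, {l | Un_cv (fun L => a L s) l}).
  { intros s. apply (bounded_growing_cv _ Sl); [intros L; apply Hinc| intros; apply Hab]. }
  exists (fun s => proj1_sig (Hb s)).
  assert (Hcv : forall s, Un_cv (fun L => a L s) (proj1_sig (Hb s))) by (intros; apply proj2_sig).
  split; auto.
  set (b := fun s => proj1_sig (Hb s)) in *.
  assert (Hbnn : forall s, 0 <= b s).
  { intros. eapply Rle_cv_lim; [| apply Un_cv_const | apply Hcv]. intros; simpl; auto. }
  assert (HbL : forall L s, a L s <= b s).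
  { intros. apply (growing_ineq (fun L => a L s)); [intros n; apply Hinc| apply Hcv]. }
  assert (Hpb : forall N, sum_f_R0 b N <= Sl).
  { intros N. eapply Rle_cv_lim; [| apply (sum_cv a b Hcv N) | apply Un_cv_const].
    intros L. simpl. apply Rle_trans with (Ssum L); auto. apply psum_le; auto. }
  destruct (sum_cv_bounded b Sl Hbnn Hpb) as [T HT].
  assert (T <= Sl) by (eapply Rle_cv_lim; [| apply HT | apply Un_cv_const]; intros; simpl; auto).
  assert (Sl <= T).
  { eapply Rle_cv_lim; [| apply HS | apply Un_cv_const]. intros L. simpl.
    eapply Rle_cv_lim; [| apply (Hs L) | apply Un_cv_const]. intros N. simpl.
    apply Rle_trans with (sum_f_R0 b N); [apply sum_Rle; intros; auto| apply psum_le; auto]. }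
  replace Sl with T by lra. exact HT.
Qed.

Lemma PS_shift a x l : PS a x l -> PS (fun s => match s with 0 => 0 | S s' => a s' end) x (x * l).
Proof.
  intros H. unfold PS in *. apply Un_cv_unshift.
  apply (Un_cv_ext (fun N => x * sum_f_R0 (fun s => a s * x ^ s) N)).
  - intros N. rewrite sum_S_decomp. simpl. rewrite scal_sum. rewrite Rmult_0_l, Rplus_0_l.
    apply sum_eq. intros. ring.
  - apply CV_mult; [apply Un_cv_const| exact H].
Qed.

Lemma geom_le q N : 0 <= q <= 1/2 -> sum_f_R0 (fun t => q ^ t) N <= 2.
Proof.
  intros Hq. rewrite tech3 by lra. pose proof (pow_le q (S N) ltac:(lra)).
  apply Rmult_le_reg_r with (1 - q); [lra|]. unfold Rdiv. rewrite Rmult_assoc, Rinv_l by lra. lra.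
Qed.

Lemma extract0 (d : nat -> R) r B : 0 < r -> (forall t, Rabs (d t) * r ^ t <= B) ->
  (forall x, 0 < x <= r -> infinite_sum (fun t => d t * x ^ t) 0) ->
  d 0%nat = 0 /\ (forall x, 0 < x <= r -> infinite_sum (fun t => d (S t) * x ^ t) 0).
Proof.
  intros Hr HB HS.
  assert (HB0 : 0 <= B) by (specialize (HB 0%nat); pose proof (Rabs_pos (d 0%nat)); simpl in HB; lra).
  assert (Habs : forall t, Rabs (d t) <= B / r ^ t).
  { intros t. assert (0 < r ^ t) by (apply pow_lt; lra). apply Rmult_le_reg_r with (r ^ t); auto.
    unfold Rdiv. rewrite Rmult_assoc, Rinv_l by lra. rewrite Rmult_1_r. auto. }
  assert (Hdec : forall x N, sum_f_R0 (fun t => d t * x ^ t) (S N) =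
            d 0%nat + x * sum_f_R0 (fun t => d (S t) * x ^ t) N).
  { intros. rewrite sum_S_decomp. rewrite scal_sum. simpl. f_equal; [ring|]. apply sum_eq; intros; ring. }
  assert (Htail : forall x, 0 < x <= r/2 -> forall N,
     Rabs (sum_f_R0 (fun t => d (S t) * x ^ t) N) <= 2 * B / r).
  { intros x Hx N. apply Rle_trans with (sum_f_R0 (fun t => B / r * (x / r) ^ t) N).
    - apply Rle_trans with (sum_f_R0 (fun t => Rabs (d (S t) * x ^ t)) N); [apply Rsum_abs|].
      apply sum_Rle. intros t _. rewrite Rabs_mult. rewrite (Rabs_right (x ^ t)) by (apply Rle_ge, pow_le; lra).
      apply Rle_trans with (B / r ^ (S t) * x ^ t).
      + apply Rmult_le_compat_r; [apply pow_le; lra| apply Habs].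
      + right. simpl pow. unfold Rdiv. rewrite Rpow_mult_distr, pow_inv. field.
        split; [apply pow_nonzero|]; lra.
    - replace (sum_f_R0 (fun t => B / r * (x / r) ^ t) N) with (B / r * sum_f_R0 (fun t => (x / r) ^ t) N)
        by (rewrite scal_sum; apply sum_eq; intros; ring).
      replace (2 * B / r) with (B / r * 2) by (field; lra).
      apply Rmult_le_compat_l; [apply Rmult_le_pos; [lra| left; apply Rinv_0_lt_compat; lra]|].
      apply geom_le. split; [apply Rmult_le_pos; [lra| left; apply Rinv_0_lt_compat; lra]|].
      apply Rmult_le_reg_r with r; [lra|]. unfold Rdiv. rewrite Rmult_assoc, Rinv_l by lra. lra. }
  assert (Hd0 : forall x, 0 < x <= r/2 -> Rabs (d 0%nat) <= 2 * B / r * x).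
  { intros x Hx. apply Rnot_lt_le. intros Hlt.
    set (e := Rabs (d 0%nat) - 2 * B / r * x).
    assert (He : e > 0) by (unfold e; lra).
    destruct (HS x ltac:(lra) e He) as [N HN]. specialize (HN (S N) ltac:(lia)).
    unfold Rdist in HN. rewrite Rminus_0_r, Hdec in HN. specialize (Htail x Hx N).
    set (Q := sum_f_R0 (fun t => d (S t) * x ^ t) N) in *.
    assert (Rabs (x * Q) <= x * (2 * B / r)).
    { rewrite Rabs_mult, Rabs_right by lra. apply Rmult_le_compat_l; lra. }
    pose proof (Rabs_triang (d 0%nat + x * Q) (- (x * Q))). rewrite Rabs_Ropp in H0.
    replace (d 0%nat + x * Q + - (x * Q)) with (d 0%nat) in H0 by ring. unfold e in HN. lra. }
  assert (Hz : d 0%nat = 0).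
  { destruct (Req_dec (d 0%nat) 0) as [E|E]; auto. exfalso.
    assert (Hp : Rabs (d 0%nat) > 0) by (apply Rabs_pos_lt; auto).
    set (x := Rmin (r/2) (Rabs (d 0%nat) * r / (4 * B + 1))).
    assert (Hx0 : 0 < x).
    { unfold x. apply Rmin_pos; [lra|]. apply Rmult_lt_0_compat; [apply Rmult_lt_0_compat; lra|].
      apply Rinv_0_lt_compat; lra. }
    assert (Hx1 : x <= r / 2) by apply Rmin_l.
    assert (Hx2 : x <= Rabs (d 0%nat) * r / (4 * B + 1)) by apply Rmin_r.
    specialize (Hd0 x (conj Hx0 Hx1)).
    assert (2 * B / r * x <= 2 * B / r * (Rabs (d 0%nat) * r / (4 * B + 1))).
    { apply Rmult_le_compat_l; auto. apply Rmult_le_pos; [lra| left; apply Rinv_0_lt_compat; lra]. }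
    replace (2 * B / r * (Rabs (d 0%nat) * r / (4 * B + 1))) with (Rabs (d 0%nat) * (2 * B / (4 * B + 1))) in H by (field; lra).
    assert (2 * B / (4 * B + 1) < 1).
    { apply Rmult_lt_reg_r with (4 * B + 1); [lra|]. unfold Rdiv. rewrite Rmult_assoc, Rinv_l by lra. lra. }
    assert (Rabs (d 0%nat) * (2 * B / (4 * B + 1)) < Rabs (d 0%nat)).
    { rewrite <- (Rmult_1_r (Rabs (d 0%nat))) at 2. apply Rmult_lt_compat_l; auto. }
    lra. }
  split; auto.
  intros x Hx. apply (Un_cv_ext (fun N => / x * sum_f_R0 (fun t => d t * x ^ t) (S N))).
  - intros N. rewrite Hdec, Hz. field. lra.
  - replace 0 with (/ x * 0) by ring. apply CV_mult; [apply Un_cv_const|]. apply Un_cv_shift. apply HS; auto.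
Qed.


Lemma extract (c : nat -> R) r B : 0 < r -> (forall t, Rabs (c t) * r ^ t <= B) ->
  (forall x, 0 < x <= r -> infinite_sum (fun t => c t * x ^ t) 0) -> forall s, c s = 0.
Proof.
  intros Hr HB HS.
  assert (Main : forall s, (forall x, 0 < x <= r -> infinite_sum (fun t => c (t + s)%nat * x ^ t) 0) /\
                      (forall t, Rabs (c (t + s)%nat) * r ^ t <= B / r ^ s)).
  { induction s.
    - split.
      + intros x Hx. eapply infinite_sum_ext; [| apply HS; exact Hx]. intros t. cbv beta. rewrite Nat.add_0_r. reflexivity.
      + intros t. rewrite Nat.add_0_r. simpl. unfold Rdiv. rewrite Rinv_1, Rmult_1_r. auto.
    - destruct IHs as [H1 H2].
      destruct (extract0 (fun t => c (t + s)%nat) r (B / r ^ s) Hr H2 H1) as [_ H3]. split.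
      + intros x Hx. eapply infinite_sum_ext; [| apply H3; exact Hx]. intros t. cbv beta.
        replace (t + S s)%nat with (S (t + s)) by lia. reflexivity.
      + intros t. specialize (H2 (S t)). simpl in H2. replace (t + S s)%nat with (S (t + s)) by lia.
        assert (0 < r ^ t) by (apply pow_lt; lra).
        apply Rmult_le_reg_r with r; [lra|]. simpl pow. unfold Rdiv in *.
        replace (B * / (r * r ^ s) * r) with (B * / r ^ s) by (field; split; [apply pow_nonzero|]; lra).
        replace (Rabs (c (S (t + s))) * r ^ t * r) with (Rabs (c (S (t + s))) * (r * r ^ t)) by ring.
        exact H2. }
  intros s. destruct (Main s) as [H1 H2].
  destruct (extract0 (fun t => c (t + s)%nat) r (B / r ^ s) Hr H2 H1) as [H3 _]. exact H3.
Qed.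

Lemma PS_Rb x k J : 0 <= x < 1 -> PS (fun s => Nsum (s + k) k J) x (Rb x k J).
Proof. intros Hx. apply (PS_Qb x Hx k 0 J). Qed.

Fixpoint zc (k L s : nat) : R :=
  match L with 0 => 0 | S L' => zc k L' s + Nsum (s + k) k (S L') / (INR (S L' + 1) * INR (S L' + 2)) end.

Lemma PS_Zs x k L : 0 <= x < 1 -> PS (zc k L) x (Zs x k L).
Proof.
  intros Hx. induction L.
  - simpl. eapply PS_ext; [|apply PS_zero]. intros; reflexivity.
  - change (Zs x k (S L)) with (Zs x k L + Rb x k (S L) / (INR (S L + 1) * INR (S L + 2))).
    replace (Zs x k L + Rb x k (S L) / (INR (S L + 1) * INR (S L + 2))) with
      (Zs x k L + / (INR (S L + 1) * INR (S L + 2)) * Rb x k (S L)) by (unfold Rdiv; ring).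
    eapply PS_ext; [| apply PS_plus; [exact IHL| apply (PS_scal (/ (INR (S L + 1) * INR (S L + 2)))); apply PS_Rb; auto]].
    intros s. cbn [zc]. unfold Rdiv. ring.
Qed.

Lemma zc_nonneg k L s : 0 <= zc k L s.
Proof.
  induction L; cbn [zc]; [lra|]. apply Rplus_le_le_0_compat; auto. apply Rmult_le_pos.
  apply G_nonneg. left. apply Rinv_0_lt_compat. apply Rmult_lt_0_compat; apply lt_0_INR; lia.
Qed.

Lemma zc_inc k L s : zc k L s <= zc k (S L) s.
Proof.
  cbn [zc]. assert (0 <= Nsum (s + k) k (S L) / (INR (S L + 1) * INR (S L + 2))).
  { apply Rmult_le_pos. apply G_nonneg. left. apply Rinv_0_lt_compat. apply Rmult_lt_0_compat; apply lt_0_INR; lia. }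
  lra.
Qed.

Lemma eta_zc k s l : eta011_is (Nsum (s + k) k) l <-> Un_cv (fun L => zc k L s) l.
Proof.
  assert (E : forall N, sum_f_R0 (fun j => Nsum (s + k) k (S j) / (INR (S j + 1) * INR (S j + 2))) N = zc k (S N) s).
  { induction N; [simpl; ring|]. rewrite tech5, IHN. reflexivity. }
  unfold eta011_is. split; intros H.
  - apply Un_cv_unshift. eapply Un_cv_ext; [| exact H]. intros; apply E.
  - eapply Un_cv_ext; [| apply Un_cv_shift; exact H]. intros; symmetry; apply E.
Qed.

Lemma Zconv x k : 0 <= x <= 1/2 -> exists W, Un_cv (Zs x (S k)) W.
Proof.
  intros Hx. induction k.
  - destruct (Zlim1 x Hx) as [w [Rz [_ [H _]]]]. eauto.
  - destruct IHk as [w Hw]. destruct (ZlimS x Hx k w Hw) as [w' [Rz [_ [H _]]]]. eauto.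
Qed.

Lemma Z_core k x W : 0 < x <= 1/2 -> Un_cv (Zs x k) W ->
  exists b, (forall s, Un_cv (fun L => zc k L s * x ^ s) (b s)) /\ infinite_sum b W.
Proof.
  intros Hx HW. apply (ML (fun L s => zc k L s * x ^ s) (Zs x k)).
  - intros. apply Rmult_le_pos; [apply zc_nonneg| apply pow_le; lra].
  - intros. apply Rmult_le_compat_r; [apply pow_le; lra| apply zc_inc].
  - intros L. apply PS_Zs. lra.
  - exact HW.
Qed.

Lemma eta_ex k : exists e : nat -> R, forall s, eta011_is (Nsum (s + S k) (S k)) (e s).
Proof.
  destruct (Zconv (1/2) k ltac:(lra)) as [W HW].
  destruct (Z_core (S k) (1/2) W ltac:(lra) HW) as [b [Hb _]].
  exists (fun s => b s / (1/2) ^ s). intros s. apply eta_zc.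
  apply (Un_cv_ext (fun L => zc (S k) L s * (1/2) ^ s * / (1/2) ^ s)).
  { intros. field. apply pow_nonzero. lra. }
  apply CV_mult; [apply Hb| apply Un_cv_const].
Qed.

Lemma eta_PS k x e W : 0 < x <= 1/2 -> (forall s, eta011_is (Nsum (s + k) k) (e s)) ->
  Un_cv (Zs x k) W -> infinite_sum (fun s => e s * x ^ s) W.
Proof.
  intros Hx He HW. destruct (Z_core k x W Hx HW) as [b [Hb HbW]].
  eapply infinite_sum_ext; [| exact HbW]. intros s. eapply UL_sequence; [apply Hb|].
  apply CV_mult; [apply eta_zc; apply He| apply Un_cv_const].
Qed.

Lemma e_nonneg k e s : eta011_is (Nsum (s + k) k) e -> 0 <= e.
Proof. intros H. apply eta_zc in H. eapply Rle_cv_lim; [| apply Un_cv_const| exact H].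
  intros; apply zc_nonneg. Qed.

Lemma dmul_delta n s : n <> 0 -> dmul n (fun s => if Nat.eqb s 0 then 1 else 0) s = / n ^ (S s).
Proof. intros Hn. induction s; simpl dmul.
  - simpl. field. auto.
  - rewrite IHs. simpl Nat.eqb. simpl pow. field. split; auto. apply pow_nonzero; auto. Qed.

Lemma PS_gterm x m j : 0 <= x <= 1/2 ->
  PS (fun t => / INR (S m) ^ (j + 2 + t)) x (g x (S m) / INR (S m) ^ (S j)).
Proof.
  intros Hx. assert (H1 : 1 <= INR (S m)) by (apply (le_INR 1); lia).
  pose (c := fun s : nat => if Nat.eqb s 0 then 1 else 0).
  assert (Hc : forall s, 0 <= c s) by (intros s; unfold c; destruct (Nat.eqb s 0); lra).
  pose proof (PS_dmul (INR (S m)) c x 1 ltac:(lra) ltac:(lra) Hc (PS_delta x)) as H.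
  apply (PS_scal (/ INR (S m) ^ (S j))) in H.
  replace (g x (S m) / INR (S m) ^ (S j)) with (/ INR (S m) ^ S j * (1 / (INR (S m) - x))) by (unfold g, Rdiv; ring).
  eapply PS_ext; [| exact H].
  intros t. unfold c. rewrite dmul_delta by lra. replace (j + 2 + t)%nat with (S j + S t)%nat by lia.
  rewrite pow_add. rewrite Rinv_mult. reflexivity.
Qed.

Lemma PS_sumf (c : nat -> nat -> R) (v : nat -> R) x M :
  (forall m, PS (c m) x (v m)) -> PS (fun s => sum_f_R0 (fun m => c m s) M) x (sum_f_R0 v M).
Proof. intros H. induction M; simpl; auto. apply PS_plus; auto. Qed.

Lemma Rz_core j x Rz : 0 < x <= 1/2 -> infinite_sum (fun m => g x (S m) / INR (S m) ^ (S j)) Rz ->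
  exists b, (forall t, Un_cv (fun M => sum_f_R0 (fun m => / INR (S m) ^ (j + 2 + t)) M * x ^ t) (b t))
            /\ infinite_sum b Rz.
Proof.
  intros Hx HR. apply (ML (fun M t => sum_f_R0 (fun m => / INR (S m) ^ (j + 2 + t)) M * x ^ t)
                         (fun M => sum_f_R0 (fun m => g x (S m) / INR (S m) ^ (S j)) M)).
  - intros. apply Rmult_le_pos; [| apply pow_le; lra]. apply cond_pos_sum. intros.
    left. apply Rinv_0_lt_compat. apply pow_lt. apply lt_0_INR; lia.
  - intros. apply Rmult_le_compat_r; [apply pow_le; lra|]. rewrite tech5.
    assert (0 < / INR (S (S L)) ^ (j + 2 + s)) by (apply Rinv_0_lt_compat; apply pow_lt; apply lt_0_INR; lia). lra.
  - intros M. apply (PS_sumf (fun m t => / INR (S m) ^ (j + 2 + t))). intros m. apply PS_gterm. lra.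
  - exact HR.
Qed.

Lemma zeta_ex j : exists z : nat -> R, forall t, infinite_sum (fun m => / INR (S m) ^ (j + 2 + t)) (z t).
Proof.
  destruct (Phi_cv (1/2) ltac:(lra) j) as [Rz [HR _]].
  destruct (Rz_core j (1/2) Rz ltac:(lra) HR) as [b [Hb _]].
  exists (fun t => b t / (1/2) ^ t). intros t.
  apply (Un_cv_ext (fun M => sum_f_R0 (fun m => / INR (S m) ^ (j + 2 + t)) M * (1/2) ^ t * / (1/2) ^ t)).
  { intros. field. apply pow_nonzero. lra. }
  apply CV_mult; [apply Hb| apply Un_cv_const].
Qed.

Lemma zeta_PS j x z Rz : 0 < x <= 1/2 -> (forall t, infinite_sum (fun m => / INR (S m) ^ (j + 2 + t)) (z t)) ->
  infinite_sum (fun m => g x (S m) / INR (S m) ^ (S j)) Rz -> infinite_sum (fun t => z t * x ^ t) Rz.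
Proof.
  intros Hx Hz HR. destruct (Rz_core j x Rz Hx HR) as [b [Hb HbR]].
  eapply infinite_sum_ext; [| exact HbR]. intros t. eapply UL_sequence; [apply Hb|].
  apply CV_mult; [apply Hz| apply Un_cv_const].
Qed.

Lemma z_nonneg n z : infinite_sum (fun m => / INR (S m) ^ n) z -> 0 <= z.
Proof. intros H. eapply Rle_cv_lim; [| apply Un_cv_const| exact H]. intros; apply cond_pos_sum.
  intros. left. apply Rinv_0_lt_compat. apply pow_lt. apply lt_0_INR; lia. Qed.

Definition sh (f : nat -> R) (s : nat) : R := match s with 0 => 0 | S t => f t end.
Definition dl (s : nat) : R := if Nat.eqb s 0 then 1 else 0.

Lemma term_le' (a : nat -> R) r Sm : 0 <= r -> (forall s, 0 <= a s) ->
  infinite_sum (fun s => a s * r ^ s) Sm -> forall N, a N * r ^ N <= Sm.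
Proof. intros Hr Ha HS N. apply (term_le (fun s => a s * r ^ s)); auto.
  intros; apply Rmult_le_pos; [auto| apply pow_le; lra]. Qed.

Lemma sh_bound (a : nat -> R) r Sm : 0 < r <= 1 -> (forall s, 0 <= a s) ->
  infinite_sum (fun s => a s * r ^ s) Sm -> forall s, 0 <= sh a s /\ sh a s * r ^ s <= Sm.
Proof.
  intros Hr Ha HS s. destruct s; simpl sh.
  - split; [lra|]. rewrite Rmult_0_l. apply Rle_trans with (a 0%nat * r ^ 0).
    apply Rmult_le_pos; [auto| apply pow_le; lra]. apply term_le'; auto; lra.
  - split; auto. apply Rle_trans with (a s * r ^ s).
    + simpl. assert (0 <= a s * r ^ s) by (apply Rmult_le_pos; [auto| apply pow_le; lra]).
      replace (a s * (r * r ^ s)) with (r * (a s * r ^ s)) by ring.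
      rewrite <- (Rmult_1_l (a s * r ^ s)) at 2. apply Rmult_le_compat_r; lra.
    + apply term_le'; auto; lra.
Qed.

Lemma rel_generic (p u v : nat -> R) :
  (forall s, 0 <= p s) -> (forall s, 0 <= u s) -> (forall s, 0 <= v s) ->
  (forall x, 0 < x <= 1/2 -> exists Wp Wu Wv,
     infinite_sum (fun s => p s * x ^ s) Wp /\ infinite_sum (fun s => u s * x ^ s) Wu /\
     infinite_sum (fun s => v s * x ^ s) Wv /\ (1 + x) * Wp - Wu = x * Wv) ->
  forall s, p s + sh p s - u s - sh v s = 0.
Proof.
  intros Hp Hu Hv H.
  destruct (H (1/2) ltac:(lra)) as [Wp [Wu [Wv [H1 [H2 [H3 _]]]]]].
  apply (extract (fun s => p s + sh p s - u s - sh v s) (1/2) (Wp + Wp + Wu + Wv)).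
  - lra.
  - intros t. pose proof (sh_bound p (1/2) Wp ltac:(lra) Hp H1 t) as [A1 A2].
    pose proof (sh_bound v (1/2) Wv ltac:(lra) Hv H3 t) as [B1 B2].
    assert (C1 : p t * (1/2) ^ t <= Wp) by (apply term_le'; auto; lra).
    assert (C2 : u t * (1/2) ^ t <= Wu) by (apply term_le'; auto; lra).
    assert (Hr : 0 < (1/2) ^ t) by (apply pow_lt; lra).
    pose proof (Hp t). pose proof (Hu t).
    assert (Rabs (p t + sh p t - u t - sh v t) <= p t + sh p t + u t + sh v t).
    { apply Rabs_le. lra. }
    apply Rle_trans with ((p t + sh p t + u t + sh v t) * (1/2) ^ t).
    + apply Rmult_le_compat_r; lra.
    + rewrite !Rmult_plus_distr_r. lra.
  - intros x Hx. destruct (H x Hx) as [Wp' [Wu' [Wv' [G1 [G2 [G3 G4]]]]]].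
    pose proof (PS_shift p x Wp' G1) as G5. pose proof (PS_shift v x Wv' G3) as G6. unfold PS in G5, G6.
    pose proof (infinite_sum_plus _ _ _ _ G1 G5) as T1.
    pose proof (infinite_sum_scal (-1) _ _ G2) as T2.
    pose proof (infinite_sum_scal (-1) _ _ G6) as T3.
    pose proof (infinite_sum_plus _ _ _ _ (infinite_sum_plus _ _ _ _ T1 T2) T3) as T.
    replace 0 with (Wp' + x * Wp' + -1 * Wu' + -1 * (x * Wv')) by lra.
    eapply infinite_sum_ext; [| exact T]. intros s. cbv beta. unfold sh. destruct s; ring.
Qed.

Lemma rel1 e1 z : (forall s, eta011_is (Nsum (s + 1) 1) (e1 s)) ->
  (forall t, infinite_sum (fun m => / INR (S m) ^ (0 + 2 + t)) (z t)) ->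
  forall s, e1 s + sh e1 s - dl s - sh z s = 0.
Proof.
  intros He Hz. apply rel_generic.
  - intros s. eapply e_nonneg. apply He.
  - intros s. unfold dl. destruct (Nat.eqb s 0); lra.
  - intros t. eapply z_nonneg. apply Hz.
  - intros x Hx. destruct (Zlim1 x ltac:(lra)) as [w [Rz [HRz [Hw Hrel]]]].
    exists w, 1, Rz. split; [|split; [|split]].
    + apply (eta_PS 1 x e1 w Hx He Hw).
    + apply (PS_delta x).
    + apply (zeta_PS 0 x z Rz Hx Hz HRz).
    + lra.
Qed.

Lemma rel2 k ek2 ek1 z : (forall s, eta011_is (Nsum (s + S (S k)) (S (S k))) (ek2 s)) ->
  (forall s, eta011_is (Nsum (s + S k) (S k)) (ek1 s)) ->
  (forall t, infinite_sum (fun m => / INR (S m) ^ (S k + 2 + t)) (z t)) ->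
  forall s, ek2 s + sh ek2 s - ek1 s - sh z s = 0.
Proof.
  intros H2 H1 Hz. apply rel_generic.
  - intros s. eapply e_nonneg. apply H2.
  - intros s. eapply e_nonneg. apply H1.
  - intros t. eapply z_nonneg. apply Hz.
  - intros x Hx. destruct (Zconv x k ltac:(lra)) as [w Hw].
    destruct (ZlimS x ltac:(lra) k w Hw) as [w' [Rz [HRz [Hw' Hrel]]]].
    exists w', w, Rz. split; [|split; [|split]].
    + apply (eta_PS (S (S k)) x ek2 w' Hx H2 Hw').
    + apply (eta_PS (S k) x ek1 w Hx H1 Hw).
    + apply (zeta_PS (S k) x z Rz Hx Hz HRz).
    + lra.
Qed.

Lemma eta_uniq f l1 l2 : eta011_is f l1 -> eta011_is f l2 -> l1 = l2.
Proof. unfold eta011_is. apply uniq_sum. Qed.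

Lemma diag k : eta011_is (Nsum (S k) (S k)) 1.
Proof.
  induction k.
  - destruct (eta_ex 0) as [e1 He1]. destruct (zeta_ex 0) as [z Hz].
    pose proof (rel1 e1 z He1 Hz 0) as R. unfold sh, dl in R. simpl in R.
    replace 1 with (e1 0%nat) by lra. apply (He1 0%nat).
  - destruct (eta_ex (S k)) as [e2 He2]. destruct (eta_ex k) as [e1 He1].
    destruct (zeta_ex (S k)) as [z Hz].
    pose proof (rel2 k e2 e1 z He2 He1 Hz 0) as R. unfold sh in R.
    assert (E1 : e1 0%nat = 1) by (apply (eta_uniq (Nsum (S k) (S k))); [apply (He1 0%nat)| exact IHk]).
    replace 1 with (e2 0%nat) by lra. apply (He2 0%nat).
Qed.

Theorem mainTheorem10 :
  (forall n : nat, (1 <= n)%nat -> eta011_is (Nsum n n) 1) /\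
  (forall n : nat, (2 <= n)%nat ->
     exists z a : R, zeta_is n z /\ eta011_is (Nsum (n - 1) 1) a /\
                     eta011_is (Nsum n 1) (z - a)) /\
  (forall n k : nat, (2 <= n)%nat -> (1 < k < n)%nat ->
     exists z a b : R, zeta_is n z /\ eta011_is (Nsum (n - 1) (k - 1)) a /\
                       eta011_is (Nsum (n - 1) k) b /\
                       eta011_is (Nsum n k) (z + a - b)).
Proof.
  split; [|split].
  - intros n Hn. destruct n; [lia|]. apply diag.
  - intros n Hn. destruct (eta_ex 0) as [e1 He1]. destruct (zeta_ex 0) as [z Hz].
    destruct n as [|[|t]]; [lia|lia|].
    exists (z t), (e1 t). split; [|split].
    + unfold zeta_is. replace (S (S t)) with (0 + 2 + t)%nat by lia. apply Hz.
    + replace (S (S t) - 1)%nat with (t + 1)%nat by lia. apply He1.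
    + pose proof (rel1 e1 z He1 Hz (S t)) as R. unfold sh, dl in R. simpl Nat.eqb in R.
      replace (z t - e1 t) with (e1 (S t)) by lra.
      replace (S (S t)) with (S t + 1)%nat by lia. apply He1.
  - intros n K Hn HK. destruct K as [|[|k]]; [lia|lia|].
    destruct (eta_ex (S k)) as [e2 He2]. destruct (eta_ex k) as [e1 He1].
    destruct (zeta_ex (S k)) as [z Hz].
    assert (Ht : exists t, n = (S t + S (S k))%nat) by (exists (n - S (S (S k)))%nat; lia).
    destruct Ht as [t ->].
    exists (z t), (e1 (S t)), (e2 t). split; [|split; [|split]].
    + unfold zeta_is. replace (S t + S (S k))%nat with (S k + 2 + t)%nat by lia. apply Hz.
    + replace (S t + S (S k) - 1)%nat with (S t + S k)%nat by lia.
      replace (S (S k) - 1)%nat with (S k) by lia. apply He1.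
    + replace (S t + S (S k) - 1)%nat with (t + S (S k))%nat by lia. apply He2.
    + pose proof (rel2 k e2 e1 z He2 He1 Hz (S t)) as R. unfold sh in R.
      replace (z t + e1 (S t) - e2 t) with (e2 (S t)) by lra. apply He2.
Qed.
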